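(* Let $A$ be a differential $K$-algebra without exponents nor logarithm, and assume that the derivation $\partial:E_A\to E_A$ is surjective. If $0\to M\to Q\to N\to0$ is an exact sequence of differential modules over $A$ with $M$ and $N$ regular singular, then $Q$ is regular singular. This applies in particular to $A=K[t,t^{-1}]$ with $\partial=t\frac{d}{dt}$.
   Context: $K$ is an algebraically closed field of characteristic $0$. $K[t^K]$ is the group algebra over $K$ of $(K,+)$, with $K$-basis $t^a$ ($a\in K$), $t^at^b=t^{a+b}$; $K[t,t^{-1}]$ is identified with the span of $t^n$, $n\in\mathbb{Z}$. Fix a set $\widetilde{K/\mathbb{Z}}\subset K$ of representatives of $K/\mathbb{Z}$ with $0\in\widetilde{K/\mathbb{Z}}$. $A$ is a commutative ring with unit containing $K[t,t^{-1}]$ as a subring, with a derivation $\partial$ extending $t\frac{d}{dt}$. $A[t^K]:=A\otimes_{K[t,t^{-1}]}K[t^K]$, $E_A:=A[t^K][\ell]$ ($\ell$ an indeterminate), with derivation $\partial$ extending that of $A$, $\partial(t^a)=at^a$, $\partial(\ell)=1$. $A$ is a differential $K$-algebra without exponents nor logarithm if $\{f\in A:\partial^2 f=0\}=K$ and, for every $a\in\widetilde{K/\mathbb{Z}}\setminus\{0\}$, $\partial f+af=0$ ($f\in A$) implies $f=0$. A differential module over a differential ring $(B,\partial)$ is a $B$-module $M$ with additive $\nabla$ satisfying $\nabla(fm)=\partial(f)m+f\nabla(m)$; morphisms are $B$-linear maps commuting with the connections; exactness is exactness of underlying modules; it is trivial if isomorphic to a direct sum of copies of $(B,\partial)$. For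 a differential module $M$ over $A$, $M\otimes_AE_A$ has connection $\nabla\otimes1+1\otimes\partial$. $M$ is regular singular if $M$ is finite free as an $A$-module and $M\otimes_AE_A$ is trivial as a differential module over $E_A$. *)

(* Defs.v *)
From HB Require Import structures.
From mathcomp Require Import all_boot all_order all_algebra.
Set Implicit Arguments. Unset Strict Implicit. Unset Printing Implicit Defensive.
Import Order.TTheory GRing.Theory Num.Theory.
Local Open Scope ring_scope.

Section Defs.
Variables (K : fieldType) (A : comAlgType K).

(* t is a unit of A and K[t] -> A is injective, i.e. K[t,t^-1] is a subring *)
Definition laurent_subring (t : A) :=
  (exists u : A, t * u = 1) /\
  forall p : {poly K}, (map_poly (fun k : K => k%:A) p).[t] = 0 -> p = 0.

Definition is_derivation (d : A -> A) :=
  (forall x y, d (x + y) = d x + d y) /\ (forall x y, d (x * y) = d x * y + x * d y).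

(* A contains K[t,t^-1], d is a derivation extending t d/dt *)
Definition diff_setup (t : A) (d : A -> A) :=
  [/\ laurent_subring t, is_derivation d, d t = t & forall k : K, d k%:A = 0].

(* A is exactly K[t,t^-1] *)
Definition is_laurent (t : A) :=
  forall a : A, exists (p : {poly K}) (m : nat),
    a * t ^+ m = (map_poly (fun k : K => k%:A) p).[t].

Definition reps_KmodZ (S : K -> Prop) :=
  [/\ S 0,
      forall k, exists s, S s /\ exists n : int, k = s + n%:~R
    & forall s s' (n : int), S s -> S s' -> s = s' + n%:~R -> s = s'].

Definition no_exp_log (S : K -> Prop) (d : A -> A) :=
  (forall f : A, d (d f) = 0 <-> exists k : K, f = k%:A) /\
  (forall (a : K) (f : A), S a -> a != 0 -> d f + a *: f = 0 -> f = 0).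

(* E_A = (A (x)_{K[t,t^-1]} K[t^K])[l] is presented as the quotient of
   A[K][l] (A[K] = group algebra of (K,+) over A, basis e_k = t^k) by the
   ideal generated by t.e_0 - e_1.  An element of A[K][l] is represented by a
   formal sum: a list of pairs (k, p) standing for sum p * e_k, p in A[l]. *)
Definition EA := seq (K * {poly A}).

(* coefficient of e_k: determines the element of A[K][l] *)
Definition Ecoef (x : EA) (k : K) : {poly A} := \sum_(p <- x | p.1 == k) p.2.
Definition Eadd (x y : EA) : EA := x ++ y.
Definition Eopp (x : EA) : EA := [seq (p.1, - p.2) | p <- x].
Definition Emul (x y : EA) : EA := [seq (p.1 + q.1, p.2 * q.2) | p <- x, q <- y].
Definition Eof (a : A) : EA := [:: (0, a%:P)].
Definition Esum n (f : 'I_n -> EA) : EA := flatten [seq f i | i <- enum 'I_n].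
(* generator of the ideal : t (x) 1 - 1 (x) t^1 *)
Definition Erel (t : A) : EA := [:: (0, t%:P); (1, -1)].
Definition Eeq (t : A) (x y : EA) :=
  exists c : EA, forall k, Ecoef (Eadd x (Eopp y)) k = Ecoef (Emul c (Erel t)) k.
(* derivation of E_A: d(a t^k l^j) = (d a) t^k l^j + k a t^k l^j + j a t^k l^(j-1) *)
Definition Eder (d : A -> A) (x : EA) : EA :=
  [seq (p.1, map_poly d p.2 + p.2^`() + (p.1%:A)%:P * p.2) | p <- x].

Definition EA_der_surj (t : A) (d : A -> A) :=
  forall x : EA, exists y : EA, Eeq t (Eder d y) x.

(* E_A^r with connection y |-> dy + G y (i.e. M (x) E_A in the basis e (x) 1)
   is trivial: isomorphic to E_A^s via an invertible r x s matrix Y whose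
   columns are horizontal *)
Definition EA_trivial (t : A) (d : A -> A) (r : nat) (G : 'I_r -> 'I_r -> A) :=
  exists (s : nat) (Y : 'I_r -> 'I_s -> EA) (Z : 'I_s -> 'I_r -> EA),
    [/\ forall i j, Eeq t (Esum (fun k => Emul (Y i k) (Z k j))) (Eof (i == j)%:R),
        forall i j, Eeq t (Esum (fun k => Emul (Z i k) (Y k j))) (Eof (i == j)%:R)
      & forall i j, Eeq t (Eadd (Eder d (Y i j))
                                (Esum (fun k => Emul (Eof (G i k)) (Y k j)))) [::]].

Definition is_connection (d : A -> A) (M : lmodType A) (n : M -> M) :=
  (forall x y, n (x + y) = n x + n y) /\
  (forall (a : A) x, n (a *: x) = d a *: x + a *: n x).

Definition dmorphism (M N : lmodType A) (nM : M -> M) (nN : N -> N) (f : M -> N) :=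
  (forall (a : A) x y, f (a *: x + y) = a *: f x + f y) /\
  (forall x, f (nM x) = nN (f x)).

Definition regular_singular (t : A) (d : A -> A) (M : lmodType A) (n : M -> M) :=
  exists (r : nat) (e : 'I_r -> M),
    [/\ forall m, exists c : 'I_r -> A, m = \sum_i c i *: e i,
        forall c : 'I_r -> A, \sum_i c i *: e i = 0 -> forall i, c i = 0
      & exists G : 'I_r -> 'I_r -> A,
          (forall j, n (e j) = \sum_i G i j *: e i) /\ EA_trivial t d G].

Definition rs_ext_closed (t : A) (d : A -> A) :=
  forall (M Q N : lmodType A) (nM : M -> M) (nQ : Q -> Q) (nN : N -> N)
         (f : M -> Q) (g : Q -> N),
    is_connection d nM -> is_connection d nQ -> is_connection d nN ->
    dmorphism nM nQ f -> dmorphism nQ nN g ->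
    injective f -> (forall y, exists x, g x = y) ->
    (forall q, g q = 0 <-> exists m, q = f m) ->
    regular_singular t d nM -> regular_singular t d nN -> regular_singular t d nQ.

End Defs.

(* Main.v *)
Require Import Defs.
From HB Require Import structures.
From mathcomp Require Import all_boot all_order all_algebra.
From mathcomp Require Import generic_quotient.
From mathcomp Require Import ring.
From Stdlib Require ClassicalEpsilon.
Set Implicit Arguments. Unset Strict Implicit. Unset Printing Implicit Defensive.
Import Order.TTheory GRing.Theory Num.Theory.
Local Open Scope ring_scope.
Definition cid {T : Type} {P : T -> Prop} (h : exists x, P x) : {x | P x} :=
  ClassicalEpsilon.constructive_indefinite_description P h.

Section Block.
Variables (R : comPzRingType) (D : R -> R) (DD : forall a b, D (a + b) = D a + D b)
  (DM : forall a b, D (a * b) = D a * b + a * D b).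

Lemma D0 : D 0 = 0.
Proof. have h : D 0 + D 0 = D 0 + 0 by rewrite -DD !addr0. exact: addrI h. Qed.
Lemma DN a : D (- a) = - D a.
Proof. by apply/eqP; rewrite -subr_eq0 opprK -DD addNr D0. Qed.
Lemma Dsum (I : Type) (s : seq I) (F : I -> R) : D (\sum_(i <- s) F i) = \sum_(i <- s) D (F i).
Proof. by apply: big_morph; [exact: DD | exact: D0]. Qed.

Definition Dm m n (M : 'M[R]_(m, n)) := map_mx D M.
Lemma DmD m n (P Q : 'M[R]_(m, n)) : Dm (P + Q) = Dm P + Dm Q.
Proof. by apply/matrixP => i j; rewrite !mxE DD. Qed.
Lemma Dm0 m n : Dm (0 : 'M[R]_(m, n)) = 0.
Proof. by apply/matrixP => i j; rewrite !mxE D0. Qed.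
Lemma DmN m n (P : 'M[R]_(m, n)) : Dm (- P) = - Dm P.
Proof. by apply/matrixP => i j; rewrite !mxE DN. Qed.
Lemma DmM m n p (P : 'M[R]_(m, n)) (Q : 'M[R]_(n, p)) : Dm (P *m Q) = Dm P *m Q + P *m Dm Q.
Proof.
apply/matrixP => i j; rewrite !mxE Dsum -big_split; apply: eq_bigr => k _.
by rewrite !mxE DM.
Qed.
Lemma Dm_block m1 m2 n1 n2 (a : 'M[R]_(m1, n1)) (b : 'M[R]_(m1, n2)) (c : 'M[R]_(m2, n1)) (e : 'M[R]_(m2, n2)) :
  Dm (block_mx a b c e) = block_mx (Dm a) (Dm b) (Dm c) (Dm e).
Proof. exact: map_block_mx. Qed.

Variable sec : R -> R.
Hypothesis Dsec : forall x, D (sec x) = x.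

Lemma block_triv rM sM rN sN (YM : 'M[R]_(rM, sM)) ZM GM (YN : 'M[R]_(rN, sN)) ZN GN
  (B : 'M[R]_(rM, rN)) :
  YM *m ZM = 1%:M -> ZM *m YM = 1%:M -> Dm YM + GM *m YM = 0 ->
  YN *m ZN = 1%:M -> ZN *m YN = 1%:M -> Dm YN + GN *m YN = 0 ->
  exists (Y : 'M[R]_(rM + rN, sM + sN)) (Z : 'M[R]_(sM + sN, rM + rN)),
    [/\ Y *m Z = 1%:M, Z *m Y = 1%:M & Dm Y + block_mx GM B 0 GN *m Y = 0].
Proof.
move=> hM1 hM2 hM3 hN1 hN2 hN3.
set W := map_mx sec (- (ZM *m B *m YN)).
have hW : Dm W = - (ZM *m B *m YN).
  by apply/matrixP => i j; rewrite !mxE Dsec.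
set X := YM *m W.
exists (block_mx YM X 0 YN), (block_mx ZM (- (ZM *m X *m ZN)) 0 ZN); split.
- rewrite mulmx_block !mul0mx !mulmx0 !addr0 !add0r hM1 hN1 mulmxN !mulmxA hM1 mul1mx.
  by rewrite addNr -scalar_mx_block.
- rewrite mulmx_block !mul0mx !mulmx0 !addr0 !add0r hM2 hN2 mulNmx -!mulmxA hN2 mulmx1.
  by rewrite addrN -scalar_mx_block.
- rewrite Dm_block Dm0 mulmx_block !mul0mx !mulmx0 !addr0 !add0r.
  rewrite [block_mx _ _ _ _ + _]add_block_mx hM3 hN3 addr0.
  have -> : Dm X + (GM *m X + B *m YN) = 0.
    have e : Dm YM = - (GM *m YM) by apply/eqP; rewrite -addr_eq0 hM3.
    rewrite /X DmM hW mulmxA e mulNmx mulmxN !mulmxA hM1 mul1mx -opprD addNr.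
    by [].
  by rewrite block_mx0.
Qed.

End Block.

Section S.
Variables (K : fieldType) (A : comAlgType K).
Implicit Types x y z c : EA A.

Definition ceq x y := forall k, Ecoef x k = Ecoef y k.

Lemma EcoefE x k : Ecoef x k = \sum_(p <- x) (if p.1 == k then p.2 else 0).
Proof. by rewrite /Ecoef big_mkcond. Qed.

Lemma Ecoef_add x y k : Ecoef (Eadd x y) k = Ecoef x k + Ecoef y k.
Proof. by rewrite /Ecoef /Eadd big_cat. Qed.

Lemma Ecoef_opp x k : Ecoef (Eopp x) k = - Ecoef x k.
Proof. by rewrite !EcoefE big_map -sumrN; apply: eq_bigr => p _ /=; case: ifP; rewrite ?oppr0. Qed.

Lemma Ecoef_nil k : Ecoef [::] k = 0 :> {poly A}.
Proof. by rewrite /Ecoef big_nil. Qed.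

Lemma Ecoef_mul x y k : Ecoef (Emul x y) k =
  \sum_(p <- x) \sum_(q <- y) (if p.1 + q.1 == k then p.2 * q.2 else 0).
Proof. by rewrite EcoefE /Emul big_allpairs_dep. Qed.

Lemma Ecoef_mulr x y k : Ecoef (Emul x y) k = \sum_(p <- x) p.2 * Ecoef y (k - p.1).
Proof.
rewrite Ecoef_mul; apply: eq_bigr => p _; rewrite EcoefE mulr_sumr; apply: eq_bigr => q _.
by rewrite (can2_eq (addKr p.1) (addNKr p.1)) addrC; case: ifP; rewrite ?mulr0.
Qed.

Lemma Ecoef_mulC x y k : Ecoef (Emul x y) k = Ecoef (Emul y x) k.
Proof.
rewrite !Ecoef_mul exchange_big; apply: eq_bigr => q _; apply: eq_bigr => p _.
by rewrite addrC mulrC.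
Qed.

Lemma Ecoef_mulA x y z k : Ecoef (Emul (Emul x y) z) k = Ecoef (Emul x (Emul y z)) k.
Proof.
rewrite !Ecoef_mul /Emul big_allpairs_dep; apply: eq_bigr => p _.
rewrite big_allpairs_dep; apply: eq_bigr => q _; apply: eq_bigr => r _ /=.
by rewrite addrA mulrA.
Qed.

Lemma Emul_catl x y z : Emul (Eadd x y) z = Eadd (Emul x z) (Emul y z).
Proof. by rewrite /Emul /Eadd allpairs_cat. Qed.

Lemma Emul_oppl x y : Emul (Eopp x) y = Eopp (Emul x y).
Proof.
rewrite /Emul /Eopp allpairs_mapl map_allpairs; apply: eq_allpairs => p q /=.
by rewrite mulNr.
Qed.

Lemma ceq_refl x : ceq x x. Proof. by []. Qed.
Lemma ceq_sym x y : ceq x y -> ceq y x. Proof. by move=> h k; rewrite h. Qed.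
Lemma ceq_trans x y z : ceq x y -> ceq y z -> ceq x z.
Proof. by move=> h1 h2 k; rewrite h1 h2. Qed.
Lemma ceq_add x x' y y' : ceq x x' -> ceq y y' -> ceq (Eadd x y) (Eadd x' y').
Proof. by move=> h1 h2 k; rewrite !Ecoef_add h1 h2. Qed.
Lemma ceq_opp x x' : ceq x x' -> ceq (Eopp x) (Eopp x').
Proof. by move=> h k; rewrite !Ecoef_opp h. Qed.
Lemma ceq_mulr x y y' : ceq y y' -> ceq (Emul x y) (Emul x y').
Proof. by move=> h k; rewrite !Ecoef_mulr; apply: eq_bigr => p _; rewrite h. Qed.
Lemma ceq_mul x x' y y' : ceq x x' -> ceq y y' -> ceq (Emul x y) (Emul x' y').
Proof.
move=> h1 h2 k; rewrite (ceq_mulr x h2) Ecoef_mulC (ceq_mulr y' h1) Ecoef_mulC //.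
Qed.

Variable t : A.

Lemma EeqE x y : Eeq t x y <-> exists c, ceq (Eadd x (Eopp y)) (Emul c (Erel t)).
Proof. by []. Qed.

Lemma ceq_Eeq x y : ceq x y -> Eeq t x y.
Proof.
move=> h; exists [::] => k; rewrite Ecoef_add Ecoef_opp h subrr.
by rewrite /Emul /= Ecoef_nil.
Qed.

Lemma Eeq_refl x : Eeq t x x. Proof. exact: ceq_Eeq. Qed.

Lemma Eeq_sym x y : Eeq t x y -> Eeq t y x.
Proof.
move=> [c h]; exists (Eopp c) => k; rewrite Emul_oppl Ecoef_opp -h.
by rewrite !Ecoef_add !Ecoef_opp opprD opprK addrC.
Qed.

Lemma Eeq_trans x y z : Eeq t x y -> Eeq t y z -> Eeq t x z.
Proof.
move=> [c1 h1] [c2 h2]; exists (Eadd c1 c2) => k; rewrite Emul_catl !Ecoef_add -h1 -h2.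
by rewrite !Ecoef_add !Ecoef_opp addrA subrK.
Qed.

Lemma Eeq_add x x' y y' : Eeq t x x' -> Eeq t y y' -> Eeq t (Eadd x y) (Eadd x' y').
Proof.
move=> [c1 h1] [c2 h2]; exists (Eadd c1 c2) => k; rewrite Emul_catl !Ecoef_add -h1 -h2.
by rewrite !Ecoef_add !Ecoef_opp !Ecoef_add opprD addrACA.
Qed.

Lemma Eeq_opp x x' : Eeq t x x' -> Eeq t (Eopp x) (Eopp x').
Proof.
move=> [c h]; exists (Eopp c) => k; rewrite Emul_oppl Ecoef_opp -h.
by rewrite !Ecoef_add !Ecoef_opp opprD.
Qed.

Lemma Eeq_mull x x' y : Eeq t x x' -> Eeq t (Emul x y) (Emul x' y).
Proof.
move=> [c h]; exists (Emul c y) => k.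
have e1 : ceq (Eadd (Emul x y) (Eopp (Emul x' y))) (Emul (Eadd x (Eopp x')) y).
  by rewrite Emul_catl Emul_oppl.
rewrite e1 (ceq_mul h (ceq_refl y)) !Ecoef_mulA.
by apply: ceq_mul => // k'; rewrite Ecoef_mulC.
Qed.

Lemma Eeq_mul x x' y y' : Eeq t x x' -> Eeq t y y' -> Eeq t (Emul x y) (Emul x' y').
Proof.
move=> h1 h2; apply: Eeq_trans (Eeq_mull y h1) _.
have hc : forall u v, Eeq t (Emul u v) (Emul v u).
  by move=> u v; apply: ceq_Eeq => k; rewrite Ecoef_mulC.
apply: Eeq_trans (hc _ _) _; apply: Eeq_trans (Eeq_mull x' h2) _; exact: hc.
Qed.


Definition eqb x y : bool :=
  if ClassicalEpsilon.excluded_middle_informative (Eeq t x y) then true else false.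
Lemma eqbP x y : reflect (Eeq t x y) (eqb x y).
Proof. by rewrite /eqb; case: ClassicalEpsilon.excluded_middle_informative => h; constructor. Qed.

Lemma eqb_refl : reflexive eqb. Proof. by move=> x; apply/eqbP/Eeq_refl. Qed.
Lemma eqb_sym : symmetric eqb.
Proof. by move=> x y; apply/eqbP/eqbP => /Eeq_sym. Qed.
Lemma eqb_trans : transitive eqb.
Proof. by move=> y x z /eqbP h1 /eqbP h2; apply/eqbP/(Eeq_trans h1 h2). Qed.

Canonical eqb_equiv := EquivRel eqb eqb_refl eqb_sym eqb_trans.

Definition E := {eq_quot eqb}%qT.
HB.instance Definition _ := Choice.on E.
HB.instance Definition _ := EqQuotient.on E.


Definition pi : EA A -> E := (\pi_E)%qT.

Lemma piP x y : pi x = pi y <-> Eeq t x y.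
Proof. split; [by move/eqquotP/eqbP | by move=> h; apply/eqquotP/eqbP]. Qed.

Lemma piK (X : E) : pi (repr X) = X. Proof. exact: reprK. Qed.
Lemma repr_pi x : Eeq t (repr (pi x)) x. Proof. by apply/piP; rewrite piK. Qed.

Definition Ezero : E := pi [::].
Definition Eopp' (X : E) : E := pi (Eopp (repr X)).
Definition Eadd' (X Y : E) : E := pi (Eadd (repr X) (repr Y)).

Lemma piD x y : pi (Eadd x y) = Eadd' (pi x) (pi y).
Proof. by apply/piP/Eeq_add; apply/Eeq_sym/repr_pi. Qed.
Lemma piN x : pi (Eopp x) = Eopp' (pi x).
Proof. by apply/piP/Eeq_opp; apply/Eeq_sym/repr_pi. Qed.

Lemma EaddA : associative Eadd'.
Proof.
move=> X Y Z; rewrite -[X]piK -[Y]piK -[Z]piK -!piD; congr pi; exact: catA.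
Qed.
Lemma EaddC : commutative Eadd'.
Proof.
move=> X Y; rewrite -[X]piK -[Y]piK -!piD; apply/piP/ceq_Eeq => k.
by rewrite !Ecoef_add addrC.
Qed.
Lemma Eadd0 : left_id Ezero Eadd'.
Proof. by move=> X; rewrite -[X]piK -piD. Qed.
Lemma EaddN : left_inverse Ezero Eopp' Eadd'.
Proof.
move=> X; rewrite -[X]piK -piN -piD; apply/piP/ceq_Eeq => k.
by rewrite Ecoef_add Ecoef_opp addNr Ecoef_nil.
Qed.

HB.instance Definition _ := GRing.isZmodule.Build E EaddA EaddC Eadd0 EaddN.

Definition Eone : E := pi (Eof 1).
Definition Emul' (X Y : E) : E := pi (Emul (repr X) (repr Y)).
Lemma piM x y : pi (Emul x y) = Emul' (pi x) (pi y).
Proof. by apply/piP/Eeq_mul; apply/Eeq_sym/repr_pi. Qed.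
Lemma piD' x y : pi (Eadd x y) = pi x + pi y. Proof. exact: piD. Qed.
Lemma piN' x : pi (Eopp x) = - pi x. Proof. exact: piN. Qed.
Lemma pi0 : pi [::] = 0. Proof. by []. Qed.

Lemma EmulA : associative Emul'.
Proof.
move=> X Y Z; rewrite -[X]piK -[Y]piK -[Z]piK -!piM; apply/piP/ceq_Eeq => k.
by rewrite Ecoef_mulA.
Qed.
Lemma EmulC : commutative Emul'.
Proof.
move=> X Y; rewrite -[X]piK -[Y]piK -!piM; apply/piP/ceq_Eeq => k.
exact: Ecoef_mulC.
Qed.
Lemma Emul1 : left_id Eone Emul'.
Proof.
move=> X; rewrite -[X]piK /Eone -piM; apply/piP/ceq_Eeq => k.
by rewrite Ecoef_mulr big_cons big_nil /= subr0 mul1r addr0.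
Qed.
Lemma EmulDl : left_distributive Emul' Eadd'.
Proof.
move=> X Y Z; rewrite -[X]piK -[Y]piK -[Z]piK -[Eadd' _ _]piD -!piM -piD.
by rewrite Emul_catl.
Qed.

HB.instance Definition _ := GRing.Zmodule_isComPzRing.Build E EmulA EmulC Emul1 EmulDl.

Lemma piM' x y : pi (Emul x y) = pi x * pi y. Proof. exact: piM. Qed.
Lemma pi1 : pi (Eof 1) = 1. Proof. by []. Qed.


Section Lin.
Variables (U V : lmodType A) (phi : U -> V)
  (hphi : forall (a : A) u v, phi (a *: u + v) = a *: phi u + phi v).
Lemma lin0 : phi 0 = 0.
Proof.
have h := hphi 1 0 0; rewrite scaler0 addr0 scale1r in h.
by apply: (addrI (phi 0)); rewrite -h addr0.
Qed.
Lemma linD u v : phi (u + v) = phi u + phi v.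
Proof. by rewrite -{1}(scale1r u) hphi scale1r. Qed.
Lemma linZ a u : phi (a *: u) = a *: phi u.
Proof. by rewrite -[a *: u]addr0 hphi lin0 addr0. Qed.
Lemma linN u : phi (- u) = - phi u.
Proof. by rewrite -scaleN1r linZ scaleN1r. Qed.
Lemma lin_sum n (c : 'I_n -> A) (x : 'I_n -> U) :
  phi (\sum_i c i *: x i) = \sum_i c i *: phi (x i).
Proof.
rewrite (big_morph phi linD lin0); apply: eq_bigr => i _; exact: linZ.
Qed.
End Lin.

Section Der.
Variables (d : A -> A) (dD : forall a b, d (a + b) = d a + d b)
  (dM : forall a b, d (a * b) = d a * b + a * d b) (dt : d t = t)
  (dK : forall k : K, d k%:A = 0).

Lemma d0 : d 0 = 0.
Proof. have h : d 0 + d 0 = d 0 + 0 by rewrite -dD !addr0. exact: addrI h. Qed.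

Lemma d_sum (I : Type) (s : seq I) (F : I -> A) : d (\sum_(i <- s) F i) = \sum_(i <- s) d (F i).
Proof. by apply: big_morph; [exact: dD | exact: d0]. Qed.

Definition md (p : {poly A}) := map_poly d p.
Lemma coef_md p i : (md p)`_i = d p`_i. Proof. exact: coef_map_id0 d0. Qed.
Lemma mdD p q : md (p + q) = md p + md q.
Proof. by apply/polyP => i; rewrite coefD !coef_md coefD dD. Qed.
Lemma md0 : md 0 = 0.
Proof. by apply/polyP => i; rewrite coef_md !coef0 d0. Qed.
Lemma mdM p q : md (p * q) = md p * q + p * md q.
Proof.
apply/polyP => i; rewrite coefD !coefM coef_md coefM d_sum -big_split /=.
by apply: eq_bigr => j _; rewrite dM !coef_md.
Qed.

Definition Dk (k : K) (p : {poly A}) := md p + p^`() + (k%:A)%:P * p.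
Lemma DkD k p q : Dk k (p + q) = Dk k p + Dk k q.
Proof. rewrite /Dk mdD derivD mulrDr; ring. Qed.
Lemma Dk0 k : Dk k 0 = 0.
Proof. by rewrite /Dk md0 deriv0 mulr0 !addr0. Qed.
Lemma Dk_sum k (I : Type) (s : seq I) (F : I -> {poly A}) :
  Dk k (\sum_(i <- s) F i) = \sum_(i <- s) Dk k (F i).
Proof. by apply: big_morph; [exact: DkD | exact: Dk0]. Qed.
Lemma DkN k p : Dk k (- p) = - Dk k p.
Proof. by apply/eqP; rewrite -subr_eq0 opprK -DkD addNr Dk0. Qed.
Lemma Dk_mul a b P Q : Dk (a + b) (P * Q) = Dk a P * Q + P * Dk b Q.
Proof. rewrite /Dk mdM derivM scalerDl polyCD; ring. Qed.

Lemma Ecoef_Eder x k : Ecoef (Eder d x) k = Dk k (Ecoef x k).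
Proof.
rewrite !EcoefE big_map Dk_sum; apply: eq_bigr => p _ /=.
by case: eqP => [->|_] //; rewrite Dk0.
Qed.

Lemma Ecoef_Eder_mul x y k : Ecoef (Eder d (Emul x y)) k =
   Ecoef (Eadd (Emul (Eder d x) y) (Emul x (Eder d y))) k.
Proof.
rewrite Ecoef_Eder Ecoef_add !Ecoef_mul Dk_sum /Eder big_map -big_split /=.
apply: eq_bigr => p _; rewrite Dk_sum big_map -big_split /=; apply: eq_bigr => q _.
by case: eqP => [<-|_]; rewrite ?Dk_mul ?Dk0 ?addr0.
Qed.

Lemma Eder_Erel : ceq (Eder d (Erel t)) (Erel t).
Proof.
move=> k; congr Ecoef; rewrite /Eder /Erel /= /Dk.
have mdC a : md a%:P = (d a)%:P.
  by apply/polyP => i; rewrite coef_md !coefC; case: eqP => _ //; rewrite d0.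
have dN1 : d (-1) = 0 by rewrite -(dK (-1)) scaleN1r.
have m1 : map_poly d (-1 : {poly A}) = 0.
  apply/polyP => i; rewrite (coef_map_id0 _ _ d0) coefN coefC coef0.
  by case: eqP => _; rewrite ?oppr0 ?d0 ?dN1.
rewrite -/(md _) mdC dt derivC scale0r polyC0 mul0r !addr0 m1 derivN derivC oppr0.
by rewrite !add0r scale1r polyC1 mul1r.
Qed.

Lemma Eeq_der x y : Eeq t x y -> Eeq t (Eder d x) (Eder d y).
Proof.
move=> [c h]; exists (Eadd (Eder d c) c) => k.
rewrite Ecoef_add Ecoef_opp !Ecoef_Eder -DkN -DkD -Ecoef_opp -Ecoef_add h.
rewrite -Ecoef_Eder Ecoef_Eder_mul Emul_catl !Ecoef_add (ceq_mulr _ Eder_Erel).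
by [].
Qed.

Definition DE (X : E) : E := pi (Eder d (repr X)).
Lemma piDer x : pi (Eder d x) = DE (pi x).
Proof. by apply/piP/Eeq_der; apply/Eeq_sym/repr_pi. Qed.
Lemma DED (X Y : E) : DE (X + Y) = DE X + DE Y.
Proof.
rewrite -[X]piK -[Y]piK -piD' -!piDer -piD'; congr pi; exact: map_cat.
Qed.
Lemma DEM (X Y : E) : DE (X * Y) = DE X * Y + X * DE Y.
Proof.
rewrite -[X]piK -[Y]piK -piM' -!piDer -!piM' -piD'; apply/piP/ceq_Eeq.
exact: Ecoef_Eder_mul.
Qed.

Definition iota (a : A) : E := pi (Eof a).
Lemma iotaD a b : iota (a + b) = iota a + iota b.
Proof.
rewrite /iota -piD'; apply/piP/ceq_Eeq => k.
by rewrite Ecoef_add !EcoefE !big_cons !big_nil /=; case: eqP; rewrite ?polyCD ?addr0.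
Qed.
Lemma iota0 : iota 0 = 0.
Proof.
rewrite /iota -pi0; apply/piP/ceq_Eeq => k.
by rewrite !EcoefE !big_cons !big_nil /=; case: eqP; rewrite ?addr0.
Qed.
Lemma iota_der a : DE (iota a) = iota (d a).
Proof.
rewrite /iota -piDer; apply/piP/ceq_Eeq => k; congr Ecoef.
rewrite /Eder /= -/(md _) derivC scale0r polyC0 mul0r !addr0; congr [:: (_, _)].
by apply/polyP => i; rewrite coef_md !coefC; case: eqP => _ //; rewrite d0.
Qed.
Lemma iota_nat (b : bool) : iota b%:R = b%:R.
Proof. by case: b; rewrite ?iota0. Qed.

Lemma pi_Esum n (F : 'I_n -> EA A) : pi (Esum F) = \sum_(i < n) pi (F i).
Proof.
rewrite /Esum -big_enum /=.
elim: (enum 'I_n) => [|i s IH] /=; first by rewrite big_nil.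
by rewrite big_cons piD' IH.
Qed.


Definition trivE r (G : 'M[E]_r) := exists s (Y : 'M[E]_(r, s)) (Z : 'M[E]_(s, r)),
  [/\ Y *m Z = 1%:M, Z *m Y = 1%:M & Dm DE Y + G *m Y = 0].

Lemma pi_sum_mul n (a b : 'I_n -> EA A) :
  pi (Esum (fun k => Emul (a k) (b k))) = \sum_k pi (a k) * pi (b k).
Proof. by rewrite pi_Esum; apply: eq_bigr => k _; rewrite piM'. Qed.

Lemma pi_hor n y (g : 'I_n -> A) (b : 'I_n -> EA A) :
  pi (Eadd (Eder d y) (Esum (fun k => Emul (Eof (g k)) (b k)))) =
  DE (pi y) + \sum_k iota (g k) * pi (b k).
Proof. by rewrite piD' piDer pi_sum_mul. Qed.

Lemma EA_trivialE r (G : 'I_r -> 'I_r -> A) :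
  EA_trivial t d G <-> trivE (\matrix_(i, j) iota (G i j)).
Proof.
split.
- move=> [s [Y [Z [h1 h2 h3]]]].
  exists s, (\matrix_(i, j) pi (Y i j)), (\matrix_(i, j) pi (Z i j)); split.
  + apply/matrixP => i j; move/piP: (h1 i j); rewrite pi_sum_mul => h.
    rewrite !mxE; under eq_bigr do rewrite !mxE.
    by rewrite h -/(iota _) iota_nat.
  + apply/matrixP => i j; move/piP: (h2 i j); rewrite pi_sum_mul => h.
    rewrite !mxE; under eq_bigr do rewrite !mxE.
    by rewrite h -/(iota _) iota_nat.
  + apply/matrixP => i j; move/piP: (h3 i j); rewrite pi_hor => h.
    rewrite !mxE -[RHS]pi0 -h; congr (_ + _); apply: eq_bigr => k _; rewrite !mxE //.
- move=> [s [Y [Z [h1 h2 h3]]]].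
  exists s, (fun i j => repr (Y i j)), (fun i j => repr (Z i j)); split.
  + move=> i j; apply/piP; rewrite pi_sum_mul -/(iota _) iota_nat.
    move/matrixP: h1 => /(_ i j); rewrite !mxE => <-.
    by apply: eq_bigr => k _; rewrite !piK.
  + move=> i j; apply/piP; rewrite pi_sum_mul -/(iota _) iota_nat.
    move/matrixP: h2 => /(_ i j); rewrite !mxE => <-.
    by apply: eq_bigr => k _; rewrite !piK.
  + move=> i j; apply/piP; rewrite pi_hor pi0 piK.
    move/matrixP: h3 => /(_ i j); rewrite !mxE => h; rewrite -[RHS]h.
    by congr (_ + _); apply: eq_bigr => k _; rewrite !mxE piK.
Qed.


Lemma surjE : EA_der_surj t d -> forall X : E, exists Y, DE Y = X.
Proof.
move=> hs X; have [y hy] := hs (repr X); exists (pi y).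
by rewrite -piDer -[X]piK; apply/piP.
Qed.


Lemma ext_main : EA_der_surj t d -> rs_ext_closed t d.
Proof.
move=> hs M Q N nM nQ nN f g _ _ _ [fL fC] [gL gC] finj gsurj gker.
move=> [rM [eM [spM indM [GM [hGM trM]]]]] [rN [eN [spN indN [GN [hGN trN]]]]].
have gf m : g (f m) = 0 by apply/(gker _).2; exists m.
pose q j := sval (cid (gsurj (eN j))).
have hq j : g (q j) = eN j := svalP (cid (gsurj (eN j))).
have hB j : exists c : 'I_rM -> A,
    nQ (q j) = \sum_i GN i j *: q i + f (\sum_i c i *: eM i).
  have h0 : g (nQ (q j) - \sum_i GN i j *: q i) = 0.
    rewrite (linD gL) (linN gL) (lin_sum gL) gC hq hGN.
    by under [X in _ - X]eq_bigr do rewrite hq; rewrite subrr.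
  have [m hm] := (gker _).1 h0.
  have [c hc] := spM m.
  by exists c; rewrite -hc -hm addrC subrK.
pose B j := sval (cid (hB j)).
have hBj j : nQ (q j) = \sum_i GN i j *: q i + f (\sum_i B j i *: eM i) := svalP (cid (hB j)).
pose e (k : 'I_(rM + rN)) := match split k with inl a => f (eM a) | inr b => q b end.
have sl a : split (lshift rN a) = inl a := @unsplitK rM rN (inl a).
have sr b : split (rshift rM b) = inr b := @unsplitK rM rN (inr b).
have eL a : e (lshift rN a) = f (eM a) by rewrite /e sl.
have eR b : e (rshift rM b) = q b by rewrite /e sr.
pose G (i j : 'I_(rM + rN)) : A := match split i, split j with
  | inl a, inl b => GM a b | inl a, inr b => B b a | inr _, inl _ => 0
  | inr a, inr b => GN a b end.
exists (rM + rN), e; split.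
- move=> x.
  have [cN hcN] := spN (g x).
  have h0 : g (x - \sum_b cN b *: q b) = 0.
    rewrite (linD gL) (linN gL) (lin_sum gL) hcN.
    by under [X in _ - X]eq_bigr do rewrite hq; rewrite subrr.
  have [m hm] := (gker _).1 h0.
  have [cM hcM] := spM m.
  exists (fun k => match split k with inl a => cM a | inr b => cN b end).
  rewrite big_split_ord /=.
  under eq_bigr do rewrite sl eL.
  under [X in _ + X]eq_bigr do rewrite sr eR.
  by rewrite -(lin_sum fL) -hcM -hm subrK.
- move=> c hc.
  rewrite big_split_ord /= in hc.
  move: hc; under eq_bigr do rewrite eL; under [X in _ + X]eq_bigr do rewrite eR; move=> hc.
  have hN : \sum_b c (rshift rM b) *: eN b = 0.
    move/(congr1 g): hc; rewrite (linD gL) -(lin_sum fL) gf add0r (lin_sum gL) (lin0 gL).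
    by under eq_bigr do rewrite hq.
  have cR b : c (rshift rM b) = 0 := indN _ hN b.
  have hM : \sum_a c (lshift rN a) *: eM a = 0.
    apply: finj; rewrite (lin0 fL) (lin_sum fL); move: hc.
    by under [X in _ + X]eq_bigr do rewrite cR scale0r; rewrite big1_eq addr0.
  move=> k; case: (split_ordP k) => a ->; [exact: indM _ hM a | exact: cR].
- exists G; split.
  + move=> j; rewrite big_split_ord /=; case: (split_ordP j) => b ->.
    * rewrite eL -fC hGM (lin_sum fL).
      under [X in _ = X + _]eq_bigr do rewrite eL /G !sl.
      under [X in _ = _ + X]eq_bigr do rewrite /G sr sl scale0r.
      by rewrite big1_eq addr0.
    * rewrite eR hBj (lin_sum fL) [LHS]addrC.
      under [X in _ = X + _]eq_bigr do rewrite eL /G sl sr.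
      by under [X in _ = _ + X]eq_bigr do rewrite eR /G !sr.
  + apply/EA_trivialE.
    have [sM [YM [ZM [hM1 hM2 hM3]]]] := (EA_trivialE GM).1 trM.
    have [sN [YN [ZN [hN1 hN2 hN3]]]] := (EA_trivialE GN).1 trN.
    pose sec X := sval (cid (surjE hs X)).
    have hsec X : DE (sec X) = X := svalP (cid (surjE hs X)).
    have [Y [Z [h1 h2 h3]]] := @block_triv _ _ DED DEM _ hsec _ _ _ _ _ _ _ _ _ _
       (\matrix_(a, b) iota (B b a)) hM1 hM2 hM3 hN1 hN2 hN3.
    exists (sM + sN), Y, Z; split => //.
    suff -> : \matrix_(i, j) iota (G i j) = block_mx (\matrix_(i, j) iota (GM i j))
        (\matrix_(a, b) iota (B b a)) 0 (\matrix_(i, j) iota (GN i j)) by [].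
    apply/matrixP => i j; case: (split_ordP i) => a ->; case: (split_ordP j) => b ->;
      rewrite ?block_mxEul ?block_mxEur ?block_mxEdl ?block_mxEdr !mxE /G ?sl ?sr ?iota0 //.
Qed.


Section Laurent.
Hypothesis hL : is_laurent t.
Hypothesis hc : forall n : nat, (n.+1)%:R != 0 :> K.

Definition sing k (P : {poly A}) : E := pi [:: (k, P)].
Lemma sing_ceq k P x : ceq [:: (k, P)] x -> sing k P = pi x.
Proof. by move=> h; apply/piP/ceq_Eeq. Qed.
Lemma singD k P Q : sing k (P + Q) = sing k P + sing k Q.
Proof.
rewrite -piD'; apply: sing_ceq => k'; rewrite Ecoef_add !EcoefE !big_cons !big_nil /=.
by case: eqP; rewrite ?addr0.
Qed.
Lemma sing0 k : sing k 0 = 0.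
Proof.
rewrite -pi0; apply: sing_ceq => k'; rewrite !EcoefE !big_cons !big_nil /=.
by case: eqP; rewrite ?addr0.
Qed.
Lemma sing_sum k n (F : 'I_n -> {poly A}) : sing k (\sum_i F i) = \sum_i sing k (F i).
Proof. by apply: big_morph; [exact: singD | exact: sing0]. Qed.
Lemma singMn k P n : sing k (P *+ n) = sing k P *+ n.
Proof. by elim: n => [|n IH]; rewrite ?mulr0n ?sing0 // !mulrS singD IH. Qed.
Lemma singK k (c : A) P : sing k (c%:P * P) = iota c * sing k P.
Proof. by rewrite /iota /sing -piM' /Emul /= add0r. Qed.
Lemma singT k (a : A) P : sing k ((a * t)%:P * P) = sing (k + 1) (a%:P * P).
Proof.
apply/piP; exists [:: (k, a%:P * P)] => k'; congr Ecoef.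
by rewrite /Emul /Erel /= addr0 polyCM mulrN1; congr [:: (_, _); (_, _)]; ring.
Qed.
Lemma singTn k (a : A) P m : sing k ((a * t ^+ m)%:P * P) = sing (k + m%:R) (a%:P * P).
Proof.
elim: m k a => [|m IH] k a; first by rewrite expr0 mulr1 addr0.
by rewrite exprS mulrA IH singT -addrA natr1.
Qed.

Definition kap (c : K) : E := iota (c%:A).
Lemma kapM (a b : K) : kap a * kap b = kap (a * b).
Proof.
rewrite /kap /iota -piM' /Emul /= addr0 -polyCM; congr pi; congr [:: (_, _%:P)].
by rewrite -scalerAl mul1r scalerA.
Qed.
Lemma kap1 : kap 1 = 1. Proof. by rewrite /kap scale1r. Qed.
Lemma kap0 : kap 0 = 0. Proof. by rewrite /kap scale0r iota0. Qed.
Lemma kapD (a b : K) : kap (a + b) = kap a + kap b.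
Proof. by rewrite /kap scalerDl iotaD. Qed.
Lemma kap_nat n : kap n%:R = n%:R.
Proof. by elim: n => [|n IH]; rewrite ?kap0 // -natr1 kapD IH kap1 natr1. Qed.
Lemma DE_kap (a : K) : DE (kap a) = 0.
Proof. by rewrite /kap iota_der dK iota0. Qed.

Definition Im (X : E) := exists Y, DE Y = X.
Lemma Im0 : Im 0. Proof. exists 0; by rewrite -pi0 -piDer. Qed.
Lemma ImD X Y : Im X -> Im Y -> Im (X + Y).
Proof. by move=> [X' <-] [Y' <-]; exists (X' + Y'); rewrite DED. Qed.
Lemma ImK (a : K) X : Im X -> Im (kap a * X).
Proof. by move=> [X' <-]; exists (kap a * X'); rewrite DEM DE_kap mul0r add0r. Qed.
Lemma ImN X : Im X -> Im (- X).
Proof.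
move=> h; have e : kap (-1) = -1 by apply/eqP; rewrite -addr_eq0 -kap1 -kapD addNr kap0.
by rewrite -mulN1r -e; apply: ImK.
Qed.
Lemma ImMn X n : Im X -> Im (X *+ n).
Proof.
move=> h; elim: n => [|n IH]; first by rewrite mulr0n; exact: Im0.
by rewrite mulrS; apply: ImD.
Qed.
Lemma Im_sum n (F : 'I_n -> E) : (forall i, Im (F i)) -> Im (\sum_i F i).
Proof.
move=> h; elim/big_ind: _ => //; [exact: Im0 | exact: ImD].
Qed.

Lemma DE_sing k P : DE (sing k P) = sing k (Dk k P).
Proof. by rewrite /sing -piDer. Qed.
Lemma Dk_Xn k j : Dk k 'X^j = (k%:A)%:P * 'X^j + 'X^(j.-1) *+ j.
Proof.
rewrite /Dk derivXn; have -> : md 'X^j = 0.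
  apply/polyP => i; rewrite coef_md coefXn coef0; case: eqP => _; last exact: d0.
  by rewrite -(scale1r 1) dK.
by rewrite add0r addrC.
Qed.

Lemma Im_u j k : Im (sing k 'X^j).
Proof.
elim: j k => [|j IH] k.
- have [->|k0] := eqVneq k 0.
    exists (sing 0 'X^1); rewrite DE_sing Dk_Xn scale0r polyC0 mul0r add0r /= mulr1n.
    by rewrite expr0.
  exists (kap k^-1 * sing k 'X^0).
  by rewrite DEM DE_kap mul0r add0r DE_sing Dk_Xn /= mulr0n addr0 singK mulrA kapM mulVf // kap1 mul1r.
- have [->|k0] := eqVneq k 0.
    pose a := ((j.+2)%:R : K)^-1.
    exists (kap a * sing 0 'X^(j.+2)).
    rewrite DEM DE_kap mul0r add0r DE_sing Dk_Xn scale0r polyC0 mul0r add0r /= singMn.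
    by rewrite -mulr_natr mulrA -kap_nat (mulrC (kap a)) -mulrA kapM /a mulVf ?kap1 ?mulr1 // hc.
  have h1 : DE (kap k^-1 * sing k 'X^(j.+1)) =
      sing k 'X^(j.+1) + kap k^-1 * (sing k 'X^j *+ j.+1).
    rewrite DEM DE_kap mul0r add0r DE_sing Dk_Xn singD singK singMn mulrDr mulrA kapM.
    by rewrite mulVf // kap1 mul1r.
  have -> : sing k 'X^(j.+1) = DE (kap k^-1 * sing k 'X^(j.+1)) - kap k^-1 * (sing k 'X^j *+ j.+1).
    by rewrite h1 addrK.
  apply: ImD; first by eexists.
  by apply/ImN/ImK/ImMn.
Qed.

Lemma Im_sing k P : Im (sing k P).
Proof.
rewrite -[P]coefK poly_def sing_sum; apply: Im_sum => i.
rewrite -mul_polyC.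
have [p [m hm]] := hL P`_i.
have -> : sing k ((P`_i)%:P * 'X^i) = sing (k - m%:R) ((P`_i * t ^+ m)%:P * 'X^i).
  by rewrite singTn subrK.
rewrite hm horner_coef; set q := map_poly _ p.
have -> : (\sum_(j < size q) q`_j * t ^+ j)%:P * 'X^i =
    \sum_(j < size q) ((((p`_j)%:A : A) * t ^+ j)%:P * 'X^i).
  rewrite (big_morph _ (@polyCD _) (@polyC0 _)) mulr_suml; apply: eq_bigr => j _.
  by rewrite coef_map_id0 // scale0r.
rewrite sing_sum; apply: Im_sum => j.
by rewrite singTn singK; apply: ImK; apply: Im_u.
Qed.

Lemma Im_all (X : E) : Im X.
Proof.
rewrite -[X]piK; elim: (repr X) => [|p x IH]; first exact: Im0.
have -> : pi (p :: x) = sing p.1 p.2 + pi x by rewrite -piD'; case: p.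
by apply: ImD; [exact: Im_sing | exact: IH].
Qed.

Lemma laurent_surj : EA_der_surj t d.
Proof.
move=> x; have [Y hY] := Im_all (pi x); exists (repr Y); apply/piP.
by rewrite piDer piK hY.
Qed.
End Laurent.

End Der.


End S.

Theorem mainTheorem12 (K : closedFieldType) (hK : [pchar K] =i pred0) :
  (forall (S : K -> Prop), reps_KmodZ S ->
     forall (A : comAlgType K) (t : A) (d : A -> A),
       diff_setup t d -> no_exp_log S d -> EA_der_surj t d -> rs_ext_closed t d)
  /\
  (forall (A : comAlgType K) (t : A) (d : A -> A),
       diff_setup t d -> is_laurent t -> rs_ext_closed t d).
Proof.
split.
- move=> S _ A t d [_ [dD dM] dt dK] _ hs.
  exact: (ext_main dD dM dt dK hs).
- move=> A t d [_ [dD dM] dt dK] hL.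
  apply: (ext_main dD dM dt dK).
  apply: (laurent_surj dD dM dt dK hL) => n.
  by move/pcharf0P: hK => ->.
Qed.
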